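(* Let $H$ be an $m\times n$ binary parity-check matrix with Tanner graph $G$, and let $\underline x$ be a point of the fundamental polytope of $H$. Let $T\subseteq\{1,\dots,m\}$ be a collection of check nodes. If $T$ is a cut-generating collection at $\underline x$, then there exists a fractional cycle at $\underline x$ (a cycle in the fractional subgraph $F$) all of whose check nodes belong to $T$.
   Context: The Tanner graph $G$ of $H$ is the bipartite graph with variable nodes $1,\dots,n$, check nodes $1,\dots,m$, and an edge between check $j$ and variable $i$ iff $H_{ji}=1$; $N(j)$ is the set of variable nodes adjacent to check $j$. The fundamental polytope is the set of $\underline x\in[0,1]^n$ such that for every $j$ and every odd-sized $V\subseteq N(j)$, $\sum_{i\in V}x_i-\sum_{i\in N(j)\setminus V}x_i\le |V|-1$. For a parity check (binary vector) with neighborhood $N$, its constraints are $\sum_{i\in V}x_i-\sum_{i\in N\setminus V}x_i\le |V|-1$ for odd $V\subseteq N$, and it generates a cut at $\underline x$ if one of them is violated at $\underline x$. A set $T$ of check nodes is a cut-generating collection at $\underline x$ if the redundant parity check obtained as the modulo-2 sum of the rows of $H$ indexed by $T$ generates a cut at $\underline x$. The fractional subgraph $F$ at $\underline x$ is the subgraph of $G$ consisting of the variable nodes $i$ with $0<x_i<1$, the check nodes adjacent to them, and all edges between these nodes; a fractional cycle is a cycle in $F$. *)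

(* Defs.v *)
From HB Require Import structures.
From mathcomp Require Import all_boot all_order all_algebra.
Set Implicit Arguments. Unset Strict Implicit. Unset Printing Implicit Defensive.
Import Order.TTheory GRing.Theory Num.Theory.
Local Open Scope ring_scope.

Definition nbhd (n : nat) (h : 'rV['F_2]_n) : {set 'I_n} :=
  [set i | h 0 i != 0].

Definition generates_cut (R : realFieldType) (n : nat)
    (h : 'rV['F_2]_n) (x : 'I_n -> R) : Prop :=
  exists V : {set 'I_n},
    [/\ V \subset nbhd h, odd #|V| &
        (#|V|%:R - 1 < \sum_(i in V) x i - \sum_(i in nbhd h :\: V) x i)].

Definition in_fundamental_polytope (R : realFieldType) (m n : nat)
    (H : 'M['F_2]_(m, n)) (x : 'I_n -> R) : Prop :=
  (forall i, 0 <= x i <= 1) /\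
  (forall j : 'I_m, forall V : {set 'I_n},
     V \subset nbhd (row j H) -> odd #|V| ->
     \sum_(i in V) x i - \sum_(i in nbhd (row j H) :\: V) x i <= #|V|%:R - 1).

Definition cut_generating (R : realFieldType) (m n : nat)
    (H : 'M['F_2]_(m, n)) (x : 'I_n -> R) (T : {set 'I_m}) : Prop :=
  generates_cut (\sum_(j in T) row j H) x.

Definition fractional (R : realFieldType) (n : nat) (x : 'I_n -> R) (i : 'I_n) : bool :=
  (0 < x i) && (x i < 1).

(* A cycle in the fractional subgraph F at x, with all check nodes in T:
   c_0 - v_0 - c_1 - v_1 - ... - c_{k-1} - v_{k-1} - c_0 with k >= 2,
   distinct check nodes c_t, distinct fractional variable nodes v_t.
   (Check nodes adjacent to fractional variables are automatically in F.) *)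
Definition fractional_cycle_in (R : realFieldType) (m n : nat)
    (H : 'M['F_2]_(m, n)) (x : 'I_n -> R) (T : {set 'I_m}) : Prop :=
  exists k : nat, exists c : 'I_k.+2 -> 'I_m, exists v : 'I_k.+2 -> 'I_n,
    [/\ injective c, injective v,
        (forall t, fractional x (v t)) /\
        (forall t, H (c t) (v t) != 0),
        (forall t, H (c (ordS t)) (v t) != 0) &
        (forall t, c t \in T)].

(* Main.v *)
Require Import Defs.
From HB Require Import structures.
From mathcomp Require Import all_boot all_order all_algebra.
From mathcomp Require Import lra zify.
Set Implicit Arguments. Unset Strict Implicit. Unset Printing Implicit Defensive.
Import Order.TTheory GRing.Theory Num.Theory.
Local Open Scope ring_scope.

Lemma f2D (u v : 'F_2) : (u + v != 0) = (u != 0) (+) (v != 0).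
Proof. by case: u => [[|[|//]]] ?; case: v => [[|[|//]]] ?. Qed.

Section Cost.
Variables (R : realFieldType) (n : nat) (x : 'I_n -> R).
Hypothesis x01 : forall i, 0 <= x i <= 1.

Definition cf (Y : {set 'I_n}) i := if i \in Y then 1 - x i else x i.

Lemma cf_ge0 Y i : 0 <= cf Y i.
Proof. rewrite /cf; have := x01 i; case: (_ \in _) => /andP[? ?]; lra. Qed.

Lemma cost_id (N V : {set 'I_n}) : V \subset N ->
  \sum_(i in N) cf V i = #|V|%:R - (\sum_(i in V) x i - \sum_(i in N :\: V) x i).
Proof.
move=> VN; rewrite (big_setID V) /= (setIidPr VN).
rewrite (eq_bigr (fun i => 1 - x i)); last by move=> i iV; rewrite /cf iV.
rewrite [X in _ + X](eq_bigr (fun i => x i)); last first.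
  by move=> i; rewrite in_setD => /andP[/negbTE iV _]; rewrite /cf iV.
rewrite sumrB sumr_const; lra.
Qed.

Lemma cut_iff (g : 'rV['F_2]_n) : generates_cut g x <->
  exists Y : {set 'I_n}, odd #|nbhd g :&: Y| /\ \sum_(i in nbhd g) cf Y i < 1.
Proof.
split.
  case=> V [VN oV lt]; exists V; rewrite (setIidPr VN); split => //.
  rewrite cost_id //; lra.
case=> Y [oY lt]; exists (nbhd g :&: Y); split => //; first exact: subsetIl.
have: \sum_(i in nbhd g) cf Y i = \sum_(i in nbhd g) cf (nbhd g :&: Y) i.
  by apply: eq_bigr => i iN; rewrite /cf in_setI iN.
move=> E; rewrite E cost_id ?subsetIl // in lt; lra.
Qed.


Lemma card_as_sum (A : {set 'I_n}) : #|A| = (\sum_i (i \in A : nat))%N.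
Proof. by rewrite -sum1_card big_mkcond. Qed.

Lemma sum_in_as (A : {set 'I_n}) (F : 'I_n -> R) :
  \sum_(i in A) F i = \sum_i (i \in A)%:R * F i.
Proof. by rewrite big_mkcond; apply: eq_bigr => i _; case: (i \in A); rewrite ?mul1r ?mul0r. Qed.

Lemma nbhdD (r g : 'rV['F_2]_n) i :
  (i \in nbhd (r + g)) = (i \in nbhd r) (+) (i \in nbhd g).
Proof. by rewrite !inE mxE f2D. Qed.

Lemma nonfrac i : ~~ fractional x i -> x i = 0 \/ x i = 1.
Proof.
rewrite /fractional negb_and -!leNgt; have := x01 i; case/andP => h0 h1.
case/orP => h; [left|right]; apply/eqP; rewrite eq_le; apply/andP; split => //.
Qed.

Lemma reduce (r g : 'rV['F_2]_n) :
  (#|[set i | fractional x i && (i \in nbhd r) && (i \in nbhd g)]| <= 1)%N ->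
  generates_cut (r + g) x -> ~ generates_cut r x -> generates_cut g x.
Proof.
move=> hk /cut_iff [Y [oY lt]] nr; apply/cut_iff.
have {}nr : forall Z, odd #|nbhd r :&: Z| -> \sum_(i in nbhd r) cf Z i < 1 -> False.
  by move=> Z o l; apply: nr; apply/cut_iff; exists Z.
set a := fun i => i \in nbhd g.
set b := fun i => i \in nbhd r.
set f := fun i => fractional x i.
pose Yb (bb : bool) := [set i | if a i && b i then (if f i then bb else x i == 1) else i \in Y].
pose CA := \sum_i (a i && ~~ b i)%:R * cf Y i.
pose CB := \sum_i (b i && ~~ a i)%:R * cf Y i.
pose s bb := \sum_i (a i && b i)%:R * cf (Yb bb) i.
pose cA := (\sum_i (a i && ~~ b i && (i \in Y) : nat))%N.
pose cB := (\sum_i (b i && ~~ a i && (i \in Y) : nat))%N.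
pose t bb := (\sum_i (a i && b i && (i \in Yb bb) : nat))%N.
set k := #|_| in hk.
have cfYb : forall bb i, ~~ (a i && b i) -> cf (Yb bb) i = cf Y i.
  by move=> bb i h; rewrite /cf inE (negbTE h).
have inYb : forall bb i, ~~ (a i && b i) -> (i \in Yb bb) = (i \in Y).
  by move=> bb i h; rewrite inE (negbTE h).
have E1 : \sum_(i in nbhd (r + g)) cf Y i = CA + CB.
  rewrite sum_in_as -big_split; apply: eq_bigr => i _ /=; rewrite nbhdD -/(a i) -/(b i).
  by case: (a i); case: (b i) => /=; rewrite ?mul1r ?mul0r ?addr0 ?add0r.
have E2 : forall bb, \sum_(i in nbhd g) cf (Yb bb) i = CA + s bb.
  move=> bb; rewrite sum_in_as -big_split; apply: eq_bigr => i _ /=.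
  rewrite -/(a i) -/(b i).
  case Ea: (a i); case Eb: (b i) => /=; rewrite ?mul1r ?mul0r ?addr0 ?add0r //.
  by rewrite cfYb // Ea Eb.
have E3 : forall bb, \sum_(i in nbhd r) cf (Yb bb) i = CB + s bb.
  move=> bb; rewrite sum_in_as -big_split; apply: eq_bigr => i _ /=.
  rewrite -/(a i) -/(b i).
  case Ea: (a i); case Eb: (b i) => /=; rewrite ?mul1r ?mul0r ?addr0 ?add0r //.
  by rewrite cfYb // Ea Eb.
have E4 : s false + s true = k%:R.
  rewrite /k card_as_sum natr_sum -big_split; apply: eq_bigr => i _ /=.
  rewrite inE -/(f i) -/(a i) -/(b i).
  case Ea: (a i); case Eb: (b i); rewrite ?andbF ?andbT ?mul0r ?addr0 //= !mul1r /cf !inE Ea Eb /=.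
  case Ef: (f i) => /=; first by rewrite addrC subrK.
  idtac.
  have := nonfrac (negbT Ef); case=> ->; rewrite ?eqxx; last by rewrite subrr addr0.
  by rewrite (_ : (0:R) == 1 = false) ?addr0 // eq_sym oner_eq0.
have sge0 : forall bb, 0 <= s bb.
  move=> bb; apply: sumr_ge0 => i _; apply: mulr_ge0; [exact: ler0n| exact: cf_ge0].
have CAge0 : 0 <= CA.
  apply: sumr_ge0 => i _; apply: mulr_ge0; [exact: ler0n| exact: cf_ge0].
have CBge0 : 0 <= CB.
  apply: sumr_ge0 => i _; apply: mulr_ge0; [exact: ler0n| exact: cf_ge0].
have F1 : #|nbhd (r + g) :&: Y| = (cA + cB)%N.
  rewrite card_as_sum -big_split; apply: eq_bigr => i _ /=.
  rewrite inE nbhdD -/(a i) -/(b i).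
  by case: (a i); case: (b i); case: (i \in Y).
have F2 : forall bb, #|nbhd g :&: Yb bb| = (cA + t bb)%N.
  move=> bb; rewrite card_as_sum -big_split; apply: eq_bigr => i _ /=.
  rewrite [in LHS]inE -/(a i).
  case Ea: (a i); case Eb: (b i) => //=; rewrite ?addn0 ?add0n //.
  by rewrite inYb // Ea Eb.
have F3 : forall bb, #|nbhd r :&: Yb bb| = (cB + t bb)%N.
  move=> bb; rewrite card_as_sum -big_split; apply: eq_bigr => i _ /=.
  rewrite [in LHS]inE -/(b i).
  case Ea: (a i); case Eb: (b i) => //=; rewrite ?addn0 ?add0n //.
  by rewrite inYb // Ea Eb.
have F4 : t true = (t false + k)%N.
  rewrite /k card_as_sum -big_split; apply: eq_bigr => i _ /=.
  have -> : (i \in [set i | fractional x i && (i \in nbhd r) & i \in nbhd g]) = f i && b i && a i by rewrite inE.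
  case Ea: (a i); case Eb: (b i) => //=; rewrite ?andbT ?andbF ?add0n // /Yb !inE Ea Eb /=.
  by case: (f i) => //=; case: (x i == 1).
rewrite E1 in lt; rewrite F1 in oY.
have go : forall bb, odd (cA + t bb) -> CA + s bb < 1 ->
    exists Y0 : {set 'I_n}, odd #|nbhd g :&: Y0| /\ \sum_(i in nbhd g) cf Y0 i < 1.
  by move=> bb o l; exists (Yb bb); rewrite F2 E2.
have no : forall bb, odd (cB + t bb) -> CB + s bb < 1 -> False.
  by move=> bb o l; apply: (nr (Yb bb)); rewrite ?F3 ?E3.
move: oY; rewrite oddD => oY.
have : (k = 0 \/ k = 1)%N by lia.
case=> Ek; rewrite Ek in E4 F4.
  have s0 : s false = 0 by have := sge0 true; have := sge0 false; lra.
  case Ot: (odd (cA + t false)).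
    by apply: (go false) => //; lra.
  exfalso; apply: (no false); last by lra.
  by move: Ot; rewrite !oddD; case: (odd cA) oY => /=; case: (odd cB); case: (odd (t false)).
have oT : odd (t true) = ~~ odd (t false) by rewrite F4 addn1 /=.
case Ot: (odd (cA + t false)).
  case: (ltrP (CA + s false) 1) => h1; first by apply: (go false).
  exfalso; apply: (no true); last by lra.
  by move: Ot; rewrite !oddD oT; case: (odd cA) oY => /=; case: (odd cB); case: (odd (t false)).
case: (ltrP (CA + s true) 1) => h1.
  by apply: (go true) => //; move: Ot; rewrite !oddD oT; case: (odd cA); case: (odd (t false)).
exfalso; apply: (no false); last by lra.
by move: Ot; rewrite !oddD; case: (odd cA) oY => /=; case: (odd cB); case: (odd (t false)).
Qed.

End Cost.
Section Walk.
Variables (R : realFieldType) (m n : nat) (H : 'M['F_2]_(m, n)) (x : 'I_n -> R)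
  (T : {set 'I_m}).

Definition Sh (j : 'I_m) : {set 'I_n} :=
  [set i | fractional x i && (H j i != 0) && [exists k in T, (k != j) && (H k i != 0)]].

Hypothesis hS : forall j, j \in T -> (1 < #|Sh j|)%N.

Lemma two j v : j \in T -> exists w, (w \in Sh j) && (w != v).
Proof.
move=> jT; case: (pickP (fun w => (w \in Sh j) && (w != v))) => [w hw|none]; first by exists w.
have sub : Sh j \subset [set v].
  apply/subsetP => w hw; have := none w; rewrite hw /= => /negbFE/eqP->; exact: set11.
by have := subset_leq_card sub; rewrite cards1 leqNgt hS.
Qed.

Definition next_c (p : 'I_m * 'I_n) :=
  odflt p.1 [pick k in T | (k != p.1) && (H k p.2 != 0)].
Definition next_v c v := odflt v [pick w | (w \in Sh c) && (w != v)].
Definition step p := let c' := next_c p in (c', next_v c' p.2).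
Definition Inv (p : 'I_m * 'I_n) := p.1 \in T /\ p.2 \in Sh p.1.

Lemma step_ok p : Inv p ->
  [/\ Inv (step p), (step p).1 != p.1, H (step p).1 p.2 != 0 & (step p).2 != p.2].
Proof.
case=> pT pS.
have : exists k, [&& k \in T, k != p.1 & H k p.2 != 0].
  move: pS; rewrite inE => /andP[_ /existsP[k /andP[kT /andP[k1 k2]]]].
  by exists k; rewrite kT k1 k2.
case=> k0 hk0.
rewrite /step /next_c; case: pickP => [k /and3P[kT k1 k2]|none]; last first.
  by have := none k0; rewrite hk0.
rewrite /=; rewrite /next_v; case: pickP => [w /andP[w1 w2]|none]; last first.
  by have [w /andP[w1 w2]] := two p.2 kT; have := none w; rewrite w1 w2.
by split.
Qed.

Lemma Sh_frac j i : i \in Sh j -> fractional x i.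
Proof. by rewrite inE => /andP[/andP[]]. Qed.
Lemma Sh_adj j i : i \in Sh j -> H j i != 0.
Proof. by rewrite inE => /andP[/andP[]]. Qed.

Variable p0 : 'I_m * 'I_n.
Hypothesis Inv0 : Inv p0.

Definition st t := iter t step p0.
Lemma stS t : st t.+1 = step (st t). Proof. by []. Qed.
Lemma st_inv t : Inv (st t).
Proof. by elim: t => // t IH; rewrite stS; case: (step_ok IH). Qed.

Definition node k : 'I_m + 'I_n :=
  if odd k then inr (st k./2).2 else inl (st k./2).1.

Lemma nodeC t : node t.*2 = inl (st t).1.
Proof. by rewrite /node odd_double (_ : t.*2./2 = t) //; lia. Qed.
Lemma nodeV t : node t.*2.+1 = inr (st t).2.
Proof. by rewrite /node /= odd_double /= uphalf_double. Qed.

Lemma node2 k : node k != node k.+2.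
Proof.
rewrite /node /= negbK.
have [_ h1 _ h2] := step_ok (st_inv k./2).
by case: (odd k); apply/negP => /eqP [] /eqP; rewrite eq_sym; apply/negP; [exact: h2 | exact: h1].
Qed.

Lemma window s k :
  (forall p q, (s.*2 <= p)%N -> (p < q)%N -> (q < (s + k.+2).*2)%N -> node p != node q) ->
  H (st s).1 (st (s + k.+1)).2 != 0 ->
  fractional_cycle_in H x T.
Proof.
move=> D Cl.
exists k, (fun t : 'I_k.+2 => (st (s + t)).1), (fun t : 'I_k.+2 => (st (s + t)).2).
split.
- move=> t1 t2 /= e; apply/val_inj/eqP/negPn/negP => ne.
  case: (ltngtP t1 t2) ne => // [lt|lt] _.
    have h := D (s + t1).*2 (s + t2).*2; rewrite !nodeC e eqxx in h; move: (ltn_ord t1) (ltn_ord t2) => l1 l2; have //: false by apply: h; lia.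
  have h := D (s + t2).*2 (s + t1).*2; rewrite !nodeC e eqxx in h; move: (ltn_ord t1) (ltn_ord t2) => l1 l2; have //: false by apply: h; lia.
- move=> t1 t2 /= e; apply/val_inj/eqP/negPn/negP => ne.
  case: (ltngtP t1 t2) ne => // [lt|lt] _.
    have h := D (s + t1).*2.+1 (s + t2).*2.+1; rewrite !nodeV e eqxx in h; move: (ltn_ord t1) (ltn_ord t2) => l1 l2; have //: false by apply: h; lia.
  have h := D (s + t2).*2.+1 (s + t1).*2.+1; rewrite !nodeV e eqxx in h; move: (ltn_ord t1) (ltn_ord t2) => l1 l2; have //: false by apply: h; lia.
- split => t; have [_ h] := st_inv (s + t); [exact: Sh_frac h | exact: Sh_adj h].
- move=> t; have -> : (ordS t : nat) = (t.+1 %% k.+2)%N by [].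
  have ht := ltn_ord t.
  case: (ltngtP t.+1 k.+2) => h.
  + rewrite modn_small // addnS stS; by have [] := step_ok (st_inv (s + t)).
  + lia.
  + by rewrite h modnn addn0 (_ : (t : nat) = k.+1) //; lia.
- by move=> t; have [] := st_inv (s + t).
Qed.


Lemma cycle_p0 : fractional_cycle_in H x T.
Proof.
pose P j := [exists i : 'I_j, node i == node j].
have hex : exists j, P j.
  case: (boolP [exists j : 'I_(m + n).+1, P j]) => [/existsP[j Pj]|]; first by exists j.
  move/existsPn => hall; exfalso.
  have inj : injective (fun k : 'I_(m + n).+1 => node k).
    move=> a b e; apply/val_inj/eqP/negPn/negP => ne.
    case: (ltngtP a b) ne => // lt _.
      by have := hall b; rewrite /P => /existsPn /(_ (Ordinal lt)) /=; rewrite e eqxx.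
    by have := hall a; rewrite /P => /existsPn /(_ (Ordinal lt)) /=; rewrite e eqxx.
  by have := leq_card _ inj; rewrite card_sum !card_ord ltnn.
case: (ex_minnP hex) => j /existsP[i /eqP eij] jmin.
have M : forall p q, (p < q)%N -> (q < j)%N -> node p != node q.
  move=> p q pq qj; apply/negP => /eqP e.
  have : P q by apply/existsP; exists (Ordinal pq); rewrite /= e.
  by move/jmin; rewrite leqNgt qj.
have ij := ltn_ord i.
have oij : odd i = odd j by move: eij; rewrite /node; case: (odd i); case: (odd j).
have nj2 : j != i.+2 :> nat.
  by apply/eqP => e; have := node2 i; rewrite -e eij eqxx.
have hi := odd_double_half i; have hj := odd_double_half j.
case Oi: (odd i) oij => oij.
- pose r := i./2; pose k := (j./2 - r - 2)%N.
  apply: (@window r.+1 k).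
  + move=> p q h1 h2 h3.
    have [qj|qj] : (q < j)%N \/ q = j by move: h1 h2 h3; rewrite /k /r; lia.
      by apply: M.
    rewrite qj -eij eq_sym; apply: M; move: h1 h2; rewrite /r; lia.
  + have e1 : (r.+1 + k.+1 = j./2)%N by rewrite /k /r; lia.
    have e2 : (st j./2).2 = (st r).2.
      move: eij; rewrite (_ : (i : nat) = r.*2.+1); last by rewrite /r; lia.
      have ej : j = (j./2).*2.+1 by lia.
      by rewrite [in node j]ej !nodeV; case=> ->.
    by rewrite e1 e2 stS; have [] := step_ok (st_inv r).
- pose s := i./2; pose k := (j./2 - s - 2)%N.
  apply: (@window s k).
  + move=> p q h1 h2 h3; apply: M => //; move: h3; rewrite /k /s; lia.
  + have e1 : (st (s + k.+2)).1 = (st s).1.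
      move: eij; rewrite (_ : (i : nat) = s.*2); last by rewrite /s; lia.
      have ej : j = (s + k.+2).*2 by rewrite /k /s; lia.
      by rewrite [in node j]ej !nodeC; case=> ->.
    by rewrite -e1 addnS stS; have [] := step_ok (st_inv (s + k.+1)).
Qed.

End Walk.

Lemma cyc_mono (R : realFieldType) m n (H : 'M['F_2]_(m, n)) (x : 'I_n -> R)
  (T T' : {set 'I_m}) : T' \subset T ->
  fractional_cycle_in H x T' -> fractional_cycle_in H x T.
Proof.
move=> sub [k [c [v [h1 h2 h3 h4 h5]]]]; exists k, c, v; split => // t.
exact: (subsetP sub).
Qed.

Lemma cut0 (R : realFieldType) m n (H : 'M['F_2]_(m, n)) (x : 'I_n -> R) :
  ~ cut_generating H x set0.
Proof.
rewrite /cut_generating big_set0 => -[V [VN oV _]].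
have : nbhd (0 : 'rV['F_2]_n) = set0 by apply/setP => i; rewrite !inE mxE eqxx.
by move=> e; rewrite e subset0 in VN; rewrite (eqP VN) cards0 in oV.
Qed.

Theorem theorem3 (R : realFieldType) (m n : nat) (H : 'M['F_2]_(m, n))
    (x : 'I_n -> R) (T : {set 'I_m}) :
  in_fundamental_polytope H x ->
  cut_generating H x T ->
  fractional_cycle_in H x T.
Proof.
case=> x01 hcon.
have no_row : forall j, ~ generates_cut (row j H) x.
  by move=> j [V [VN oV lt]]; have := hcon j V VN oV; lra.
suff main : forall N (T : {set 'I_m}), (#|T| <= N)%N ->
    cut_generating H x T -> fractional_cycle_in H x T.
  exact: main.
elim=> [|N IH] {}T cT hc.
  by move: cT; rewrite leqn0 cards_eq0 => /eqP E; rewrite E in hc; case: (cut0 hc).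
case: (set_0Vmem T) => [E|[j0 j0T]]; first by rewrite E in hc; case: (cut0 hc).
case: (boolP [exists j in T, #|Sh H x T j| <= 1]%N).
  case/existsP => j /andP[jT hj].
  apply: (@cyc_mono _ _ _ _ _ _ (T :\ j)); first exact: subsetDl.
  apply: IH; first by move: cT; rewrite (cardsD1 j T) jT; lia.
  rewrite /cut_generating.
  apply: (@reduce _ _ _ x01 (row j H)); last first.
  - exact: no_row.
  - by move: hc; rewrite /cut_generating (big_setD1 j).
  apply: leq_trans hj; apply: subset_leq_card; apply/subsetP => i.
  rewrite !inE => /andP[/andP[fi ri] gi]; rewrite fi; rewrite mxE in ri; rewrite ri /=.
  have [//|/existsPn hn] := boolP [exists k in T, (k != j) && (H k i != 0)].
  exfalso; move: gi; rewrite summxE big1 ?eqxx // => k.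
  rewrite in_setD1 => /andP[kj kT]; have := hn k; rewrite kT kj /= => /negPn/eqP.
  by rewrite mxE.
move/existsPn => hall.
have hS : forall j, j \in T -> (1 < #|Sh H x T j|)%N.
  by move=> j jT; have := hall j; rewrite jT /= ltnNge.
have : (0 < #|Sh H x T j0|)%N by apply: leq_trans (hS _ j0T).
case/card_gt0P => v0 v0S.
by apply: (@cycle_p0 _ _ _ _ _ _ hS (j0, v0)).
Qed.
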